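(* Let $s$ be a strong divisor of a local ring $R$ that is not a unit, and let $S:=R_s$, so that $R\subset S$ is Prüfer. Set $P:=\bigcap_{n\in\mathbb N}Rs^n$. Then $P$ is a prime ideal of $R$ such that the set $\{Q\in\mathrm{Spec}(R): Q\subseteq P\}$ is open in $\mathrm{Spec}(R)$ (in fact equal to $\mathrm D(s)$); moreover $S=R_P$, $PS=P$, $P$ is a divided prime ideal of $R$ (i.e. comparable under inclusion to every ideal of $R$), and $R/P$ is a valuation domain whose quotient field is $S/P$.
   Context: All rings are commutative with identity; ''local'' means having a unique maximal ideal. A strong divisor of a local ring $R$ is a regular element $t\in R$ such that $Rt$ is comparable under inclusion with every ideal of $R$. $\mathrm D(s)=\{Q\in\mathrm{Spec}(R): s\notin Q\}$. An extension $A\subseteq B$ is Prüfer if $A\subseteq C$ is a flat epimorphism for each intermediate ring $C$. *)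

(* Defs.v *)
From HB Require Import structures.
From mathcomp Require Import all_boot all_algebra.
Set Implicit Arguments. Unset Strict Implicit. Unset Printing Implicit Defensive.
Import GRing.Theory.
Local Open Scope ring_scope.

Section CommAlg.
Variable R : comUnitRingType.

Definition is_ideal (I : R -> Prop) : Prop :=
  I 0 /\ (forall x y, I x -> I y -> I (x + y)) /\ (forall r x, I x -> I (r * x)).

Definition subset_of (I J : R -> Prop) : Prop := forall x, I x -> J x.

Definition is_prime_ideal (I : R -> Prop) : Prop :=
  is_ideal I /\ ~ I 1 /\ (forall a b, I (a * b) -> I a \/ I b).

Definition is_maximal_ideal (I : R -> Prop) : Prop :=
  is_ideal I /\ ~ I 1 /\
  (forall J, is_ideal J -> subset_of I J -> subset_of J I \/ J 1).

Definition is_local_ring : Prop :=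
  exists M, is_maximal_ideal M /\
    forall N, is_maximal_ideal N -> forall x, N x <-> M x.

Definition regular (t : R) : Prop := forall x, t * x = 0 -> x = 0.

Definition principal (t : R) : R -> Prop := fun x => exists r, x = r * t.

Definition strong_divisor (t : R) : Prop :=
  regular t /\ forall I, is_ideal I ->
    subset_of (principal t) I \/ subset_of I (principal t).

Definition D (s : R) (Q : R -> Prop) : Prop := ~ Q s.

Definition zariski_open (U : (R -> Prop) -> Prop) : Prop :=
  forall Q, is_prime_ideal Q -> U Q ->
    exists f, D f Q /\ forall Q', is_prime_ideal Q' -> D f Q' -> U Q'.

Definition divided (P : R -> Prop) : Prop :=
  is_prime_ideal P /\
  forall I, is_ideal I -> subset_of I P \/ subset_of P I.

Definition powers (s : R) : R -> Prop := fun m => exists n, m = s ^+ n.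
Definition compl (P : R -> Prop) : R -> Prop := fun m => ~ P m.

Definition bigcap_pow (s : R) : R -> Prop :=
  fun x => forall n : nat, principal (s ^+ n) x.
End CommAlg.

(* f : R -> S is a localization of R at the multiplicative set M
   (standard characterisation up to unique isomorphism, Atiyah-Macdonald 3.2) *)
Definition is_localization (R S : comUnitRingType) (M : R -> Prop)
  (f : {rmorphism R -> S}) : Prop :=
  (forall m, M m -> f m \is a GRing.unit) /\
  (forall x, f x = 0 -> exists m, M m /\ x * m = 0) /\
  (forall y, exists a m, M m /\ y * f m = f a).

Definition extended_ideal (R S : comUnitRingType) (f : {rmorphism R -> S})
  (I : R -> Prop) : S -> Prop :=
  fun y => forall J : S -> Prop, is_ideal J -> (forall x, I x -> J (f x)) -> J y.

Definition image_ideal (R S : comUnitRingType) (f : {rmorphism R -> S})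
  (I : R -> Prop) : S -> Prop := fun y => exists x, I x /\ y = f x.

(* R/P is a valuation domain: P prime and for all a b, the class of a divides
   the class of b in R/P or vice versa. *)
Definition quotient_valuation_domain (R : comUnitRingType) (P : R -> Prop) : Prop :=
  is_prime_ideal P /\
  forall a b : R, (exists c, P (b - c * a)) \/ (exists c, P (a - c * b)).

(* S/J is (via f) the quotient field of R/P: J is maximal in S (S/J a field),
   the induced map R/P -> S/J is injective (f^-1(J) = P), and every element
   of S/J is a fraction of elements of R/P. *)
Definition quotient_field_of (R S : comUnitRingType) (f : {rmorphism R -> S})
  (P : R -> Prop) (J : S -> Prop) : Prop :=
  is_maximal_ideal J /\
  (forall x, J (f x) <-> P x) /\
  (forall y, exists a b, ~ P b /\ J (y * f b - f a)).

(* Main.v *)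
Require Import Defs.
From HB Require Import structures.
From mathcomp Require Import all_boot all_algebra.
From mathcomp Require Import ring.
From Stdlib Require Import Classical_Prop.
Import GRing.Theory.
Local Open Scope ring_scope.

Section Aux.
Variable R : comUnitRingType.
Variable s : R.
Hypothesis Hsd : strong_divisor s.
Hypothesis Hsu : s \notin GRing.unit.

Let P := bigcap_pow s.

Lemma regX n : regular (s ^+ n).
Proof.
elim: n => [|n IH] x; first by rewrite expr0 mul1r.
rewrite exprS -mulrA => /(proj1 Hsd) /IH //.
Qed.

Lemma principal_ideal (t : R) : is_ideal (principal t).
Proof.
split; first by exists 0; rewrite mul0r.
split.
- by move=> x y [a ->] [b ->]; exists (a + b); rewrite mulrDl.
- by move=> r x [a ->]; exists (r * a); rewrite mulrA.
Qed.

Lemma div_lemma x n : principal (s ^+ n) x \/ exists c, s ^+ n = c * x.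
Proof.
elim: n => [|n [[r Hr]|[c Hc]]].
- by left; exists x; rewrite expr0 mulr1.
- case: (proj2 Hsd _ (principal_ideal r)) => H.
  + have [d Hd] : principal r s by apply: H; exists 1; rewrite mul1r.
    right; exists d; rewrite exprS Hr Hd; ring.
  + have [e He] : principal s r by apply: H; exists 1; rewrite mul1r.
    left; exists e; rewrite exprS Hr He; ring.
- right; exists (s * c); rewrite exprS Hc; ring.
Qed.

Lemma P_ideal : is_ideal P.
Proof.
split; first by move=> n; exists 0; rewrite mul0r.
split.
- move=> x y Hx Hy n; have [a ->] := Hx n; have [b ->] := Hy n.
  by exists (a + b); rewrite mulrDl.
- move=> r x Hx n; have [a ->] := Hx n; by exists (r * a); rewrite mulrA.
Qed.

Lemma P_div x n : P x -> exists r, P r /\ x = r * s ^+ n.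
Proof.
move=> Hx; have [r0 Hr0] := Hx n; exists r0; split => // m.
have [rm Hrm] := Hx (m + n)%N.
exists rm; apply: subr0_eq; apply: (regX n).
have -> : s ^+ n * (r0 - rm * s ^+ m) = r0 * s ^+ n - rm * (s ^+ m * s ^+ n) by ring.
by rewrite -exprD -Hr0 -Hrm subrr.
Qed.

Lemma powP_not k : ~ P (s ^+ k).
Proof.
move=> H; have [r Hr] := H k.+1.
move/negP: Hsu; apply; apply/unitrPr; exists r.
apply/esym/subr0_eq; apply: (regX k).
have -> : s ^+ k * (1 - s * r) = s ^+ k - r * (s * s ^+ k) by ring.
by rewrite -exprS -Hr subrr.
Qed.

Lemma notP_iff x : ~ P x <-> exists n c, s ^+ n = c * x.
Proof.
split.
- move=> H; apply: NNPP => H'; apply: H => n.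
  case: (div_lemma x n) => // [[c Hc]]; exfalso; apply: H'; by exists n, c.
- move=> [n [c Hc]] Hx; apply: (powP_not n); rewrite Hc.
  exact: (proj2 (proj2 P_ideal)).
Qed.

Lemma P_prime : is_prime_ideal P.
Proof.
split; first exact: P_ideal.
split; first by rewrite -(expr0 s); apply: powP_not.
move=> a b Hab; apply: NNPP => H.
have Ha : ~ P a by move=> ?; apply: H; left.
have Hb : ~ P b by move=> ?; apply: H; right.
move/notP_iff: Ha => [n [c Hc]]; move/notP_iff: Hb => [m [d Hd]].
apply: (powP_not (n + m)); rewrite exprD Hc Hd.
have -> : c * a * (d * b) = (c * d) * (a * b) by ring.
exact: (proj2 (proj2 P_ideal)).
Qed.

Lemma primeX (Q : R -> Prop) n : is_prime_ideal Q -> Q (s ^+ n) -> Q s.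
Proof.
move=> [HQ [H1 Hp]]; elim: n => [|n IH]; first by rewrite expr0.
by rewrite exprS => /Hp [].
Qed.

Lemma sub_iff (Q : R -> Prop) : is_prime_ideal Q -> (subset_of Q P <-> D s Q).
Proof.
move=> HQ; split.
- move=> H Hs; apply: (powP_not 1); rewrite expr1; exact: H.
- move=> Hs x Hx; apply: NNPP => /notP_iff [n [c Hc]].
  apply: Hs; apply: (@primeX Q n HQ); rewrite Hc.
  exact: (proj2 (proj2 (proj1 HQ))).
Qed.

Lemma divided_P : divided P.
Proof.
split; first exact: P_prime.
move=> I HI; case: (classic (exists x, I x /\ ~ P x)) => [[x [Ix /notP_iff [n [c Hc]]]]|H].
- right => z Hz; have [r ->] := Hz n; rewrite Hc mulrA.
  exact: (proj2 (proj2 HI)).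
- left => x Ix; apply: NNPP => Hx; apply: H; by exists x.
Qed.

Lemma valuation_P : quotient_valuation_domain P.
Proof.
split; first exact: P_prime.
move=> a b; case: (classic (P b)) => Hb.
  by left; exists 0; rewrite mul0r subr0.
move/notP_iff: Hb => [n [c Hc]].
have regc : regular c.
  move=> x Hx; apply: (regX n); rewrite Hc.
  have -> : c * b * x = b * (c * x) by ring.
  by rewrite Hx mulr0.
case: (div_lemma (a * c) n) => [[r Hr]|[d Hd]].
- right; exists r.
  have -> : a - r * b = 0.
    apply: regc; have -> : c * (a - r * b) = a * c - r * (c * b) by ring.
    by rewrite -Hc Hr subrr.
  exact: (proj1 P_ideal).
- left; exists d.
  have -> : b - d * a = 0.
    apply: regc; have -> : c * (b - d * a) = c * b - d * (a * c) by ring.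
    by rewrite -Hc Hd subrr.
  exact: (proj1 P_ideal).
Qed.

End Aux.

Lemma ideal_ext (T : comUnitRingType) (J K : T -> Prop) :
  (forall y, J y <-> K y) -> is_ideal K -> is_ideal J.
Proof.
move=> E [H0 [HD HM]]; split; first exact/E.
split; first by move=> x y /E Hx /E Hy; apply/E; apply: HD.
by move=> r x /E Hx; apply/E; apply: HM.
Qed.

Theorem mainTheorem8 (R S : comUnitRingType) (s : R) (f : {rmorphism R -> S}) :
  is_local_ring R -> strong_divisor s -> s \notin GRing.unit ->
  is_localization (powers s) f ->
  let P := bigcap_pow s in
  is_prime_ideal P /\
  zariski_open (fun Q => subset_of Q P) /\
  (forall Q, is_prime_ideal Q -> (subset_of Q P <-> D s Q)) /\
  is_localization (compl P) f /\
  (forall y, extended_ideal f P y <-> image_ideal f P y) /\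
  divided P /\
  quotient_valuation_domain P /\
  quotient_field_of f P (extended_ideal f P).
Proof.
move=> _ Hsd Hsu [Hu [Hk Hs]] P; subst P.
have fsu n : f (s ^+ n) \is a GRing.unit by apply: Hu; exists n.
have finj x z : f x = f z -> x = z.
  move=> E; have : f (x - z) = 0 by rewrite rmorphB E subrr.
  move/Hk => [m [[k ->] Hm]]; apply: subr0_eq; apply: (regX R s Hsd k).
  by rewrite mulrC.
have PI := P_ideal R s.
have img_ideal : is_ideal (image_ideal f (bigcap_pow s)).
  split; first by exists 0; rewrite rmorph0; split => //; exact: (proj1 PI).
  split.
  - move=> _ _ [x [Hx ->]] [y [Hy ->]]; exists (x + y); rewrite rmorphD; split => //.
    exact: (proj1 (proj2 PI)).
  - move=> r _ [x [Hx ->]]; have [a [m [[n Hm] Hr]]] := Hs r; subst m.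
    have [x0 [Hx0 Ex]] := P_div R s Hsd x n Hx.
    exists (a * x0); split; first exact: (proj2 (proj2 PI)).
    by rewrite Ex !rmorphM -Hr; ring.
have ext_iff : forall y, extended_ideal f (bigcap_pow s) y <-> image_ideal f (bigcap_pow s) y.
  move=> y; split.
  - by move=> H; apply: H => // x Hx; exists x.
  - by move=> [x [Hx ->]] J HJ HJP; apply: HJP.
split; first exact: P_prime.
split.
  move=> Q HQ HQP; exists s; split; first by apply/(sub_iff R s Hsd Hsu Q HQ).
  by move=> Q' HQ' HD; apply/(sub_iff R s Hsd Hsu Q' HQ').
split; first by move=> Q HQ; apply: (sub_iff R s Hsd Hsu).
split.
  split.
    move=> m /(notP_iff R s Hsd Hsu) [n [c Hc]].
    by move: (fsu n); rewrite Hc rmorphM unitrM => /andP [].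
  split.
    move=> x; rewrite -(rmorph0 f) => /finj ->; exists 1; rewrite mul0r; split => //.
    exact: (proj1 (proj2 (P_prime R s Hsd Hsu))).
  move=> y; have [a [m [[n Hm] Hr]]] := Hs y; subst m.
  by exists a, (s ^+ n); split => //; apply: (powP_not R s Hsd Hsu).
split; first exact: ext_iff.
split; first exact: (divided_P R s Hsd Hsu).
split; first exact: (valuation_P R s Hsd Hsu).
have JI : is_ideal (extended_ideal f (bigcap_pow s)) by apply: ideal_ext img_ideal.
split.
  split; first exact: JI.
  split.
    move/ext_iff => [x [Hx]]; rewrite -(rmorph1 f) => /finj Ex.
    by apply: (proj1 (proj2 (P_prime R s Hsd Hsu))); rewrite Ex.
  move=> K HK HJK; case: (classic (exists y, K y /\ ~ extended_ideal f (bigcap_pow s) y)).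
  - move=> [y [Ky Jy]]; right.
    have [a [m [[n Hm] Hr]]] := Hs y; subst m.
    case: (classic (bigcap_pow s a)) => Ha.
      exfalso; apply: Jy; apply/ext_iff.
      have [r [Pr Er]] := P_div R s Hsd a n Ha.
      exists r; split => //; apply: (mulIr (fsu n)).
      by rewrite /= Hr Er rmorphM.
    move/(notP_iff R s Hsd Hsu): Ha => [k [c Hc]].
    have -> : 1 = (f (s ^+ n) * f c * (f (s ^+ k))^-1) * y.
      by rewrite (mulrC _ y) !mulrA Hr -rmorphM [a * c]mulrC -Hc mulrV.
    exact: (proj2 (proj2 HK)).
  - move=> H; left => y Ky; apply: NNPP => Jy; apply: H; by exists y.
split.
  move=> x; split.
  - by move/ext_iff => [z [Hz /finj ->]].
  - by move=> Hx; apply/ext_iff; exists x.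
move=> y; have [a [m [[n Hm] Hr]]] := Hs y; subst m.
exists a, (s ^+ n); split; first exact: (powP_not R s Hsd Hsu).
rewrite Hr subrr; exact: (proj1 JI).
Qed.
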